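(* Let $K$ be an algebraically closed field of characteristic $0$ and let $X$ be a finite set of distinct points in $\mathbb{P}^1\times\mathbb{P}^1\times\mathbb{P}^1$ over $K$. Let $t_1=|\pi_1(X)|$ and $t_2=|\pi_2(X)|$. For every integer $k\ge 0$, \[ r_{k+1}(X)=d_{t_1-1,t_2-1,k}-d_{t_1-1,t_2-1,k+1}=2H_X(t_1-1,t_2-1,k)-H_X(t_1-1,t_2-1,k-1)-H_X(t_1-1,t_2-1,k+1). \]
   Context: Let $R=K[x_0,x_1,y_0,y_1,z_0,z_1]$ be $\mathbb{N}^3$-graded with $\deg x_i=(1,0,0)$, $\deg y_i=(0,1,0)$, $\deg z_i=(0,0,1)$. For a point $P=[a_0:a_1]\times[b_0:b_1]\times[c_0:c_1]$, $I(P)=(a_1x_0-a_0x_1,\,b_1y_0-b_0y_1,\,c_1z_0-c_0z_1)$, and for $X=\{P_1,\dots,P_s\}$, $I(X)=\bigcap_i I(P_i)$. The Hilbert function is $H_X(i,j,k)=\dim_K R_{i,j,k}-\dim_K I(X)_{i,j,k}$ for $(i,j,k)\in\mathbb{N}^3$, and $H_X(a,b,c)=0$ if some coordinate of $(a,b,c)$ is negative. $\pi_i:\mathbb{P}^1\times\mathbb{P}^1\times\mathbb{P}^1\to\mathbb{P}^1$ is the projection to the $i$-th factor. A line of type $(1,1,0)$ is the subvariety defined by an ideal $(L,L')$ with $L\in R_{1,0,0}$, $L'\in R_{0,1,0}$ nonzero. For $i\ge1$, $r_i(X)$ is the number of lines of type $(1,1,0)$ containing exactly $i$ points of $X$. Set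 $d_{i,j,k}=H_X(i,j,k)-H_X(i,j,k-1)$. *)

(* Defs.v *)
From HB Require Import structures.
From mathcomp Require Import all_boot all_order all_algebra.
From mathcomp Require Import mpoly.
From Stdlib Require Import ClassicalEpsilon.
Set Implicit Arguments. Unset Strict Implicit. Unset Printing Implicit Defensive.
Import Order.TTheory GRing.Theory Num.Theory.
Local Open Scope ring_scope.

Section P1P1P1.
Variable K : fieldType.

Definition asb (P : Prop) : bool :=
  if excluded_middle_informative P then true else false.

Definition Rpoly := {mpoly K[6]}.
Definition var (i : nat) : Rpoly := 'X_(inord i : 'I_6).
(* x0 = var 0, x1 = var 1, y0 = var 2, y1 = var 3, z0 = var 4, z1 = var 5 *)

(* homogeneous coordinates of a point of P^1 : a nonzero pair [a0:a1] *)
Definition proj_eq (u v : K * K) : bool := u.1 * v.2 == u.2 * v.1.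
Definition nz (u : K * K) : bool := (u.1 != 0) || (u.2 != 0).

(* a point [a0:a1] x [b0:b1] x [c0:c1] of P^1 x P^1 x P^1, stored as ((a,b),c) *)
Definition pt := ((K * K) * (K * K) * (K * K))%type.
Definition valid_pt (P : pt) : bool := [&& nz P.1.1, nz P.1.2 & nz P.2].
Definition pt_eq (P Q : pt) : bool :=
  [&& proj_eq P.1.1 Q.1.1, proj_eq P.1.2 Q.1.2 & proj_eq P.2 Q.2].

Definition LP1 (P : pt) : Rpoly := P.1.1.2 *: var 0 - P.1.1.1 *: var 1.
Definition LP2 (P : pt) : Rpoly := P.1.2.2 *: var 2 - P.1.2.1 *: var 3.
Definition LP3 (P : pt) : Rpoly := P.2.2 *: var 4 - P.2.1 *: var 5.
Definition in_IP (P : pt) (f : Rpoly) : Prop :=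
  exists g1 g2 g3 : Rpoly, f = g1 * LP1 P + g2 * LP2 P + g3 * LP3 P.
Definition in_IX (X : seq pt) (f : Rpoly) : Prop :=
  forall P, P \in X -> in_IP P f.

(* R_{i,j,k}: K-span of the monomials x0^a x1^(i-a) y0^b y1^(j-b) z0^c z1^(k-c);
   an element is given by its coefficient vector in {ffun mon_idx i j k -> K} *)
Definition mon_idx (i j k : nat) : finType := ('I_i.+1 * 'I_j.+1 * 'I_k.+1)%type.
Definition mono (i j k : nat) (t : mon_idx i j k) : Rpoly :=
  var 0 ^+ t.1.1 * var 1 ^+ (i - t.1.1) * var 2 ^+ t.1.2 * var 3 ^+ (j - t.1.2)
  * var 4 ^+ t.2 * var 5 ^+ (k - t.2).
Definition poly_of (i j k : nat) (c : {ffun mon_idx i j k -> K}) : Rpoly :=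
  \sum_(t : mon_idx i j k) c t *: mono t.

Definition lin_indep (V : lmodType K) (n : nat) (v : 'I_n -> V) : Prop :=
  forall c : 'I_n -> K, \sum_(l < n) c l *: v l = 0 -> forall l, c l = 0.
(* dimension: largest n admitting n linearly independent vectors in S;
   any such n is at most #|T| (= dim of the ambient space), so the bound
   in the max is not a restriction *)
Definition sdim (T : finType) (S : {ffun T -> K^o} -> Prop) : nat :=
  \max_(n < #|T|.+1 | asb (exists v : 'I_n -> {ffun T -> K^o},
                            (forall l, S (v l)) /\ lin_indep v)) n.

Definition HX (X : seq pt) (i j k : nat) : nat :=
  sdim (fun _ : {ffun mon_idx i j k -> K^o} => True)
  - sdim (fun c : {ffun mon_idx i j k -> K^o} => in_IX X (poly_of c)).
Definition HXz (X : seq pt) (i j k : int) : int :=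
  match i, j, k with
  | Posz i, Posz j, Posz k => (HX X i j k)%:Z
  | _, _, _ => 0
  end.

Fixpoint ncls (s : seq (K * K)) : nat :=
  match s with
  | [::] => 0
  | u :: s' => (~~ has (proj_eq u) s') + ncls s'
  end.
Definition card_pi1 (X : seq pt) : nat := ncls (map (fun P => P.1.1) X).
Definition card_pi2 (X : seq pt) : nat := ncls (map (fun P => P.1.2) X).

(* lines of type (1,1,0): V(L, L'), L = l0 x0 + l1 x1, L' = m0 y0 + m1 y1,
   both nonzero; stored as ((l0,l1),(m0,m1)). Two such lines are the same
   subvariety iff L and L' are respectively proportional. *)
Definition line := ((K * K) * (K * K))%type.
Definition valid_line (l : line) : bool := nz l.1 && nz l.2.
Definition same_line (l l' : line) : bool := proj_eq l.1 l'.1 && proj_eq l.2 l'.2.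
Definition on_line (l : line) (P : pt) : bool :=
  (l.1.1 * P.1.1.1 + l.1.2 * P.1.1.2 == 0) && (l.2.1 * P.1.2.1 + l.2.2 * P.1.2.2 == 0).
Definition npts (X : seq pt) (l : line) : nat := count (on_line l) X.

Definition r_is (X : seq pt) (i n : nat) : Prop :=
  exists s : seq line,
    [/\ size s = n,
        all (fun l => valid_line l && (npts X l == i)) s,
        pairwise (fun l l' => ~~ same_line l l') s &
        forall l, valid_line l -> npts X l = i -> has (same_line l) s].

End P1P1P1.

(* Main.v *)
Require Import Defs.
From HB Require Import structures.
From mathcomp Require Import all_boot all_order all_algebra.
From mathcomp Require Import mpoly.
From mathcomp Require Import ring.
From mathcomp Require Import zify.
From Stdlib Require Import ClassicalEpsilon.
Set Implicit Arguments. Unset Strict Implicit. Unset Printing Implicit Defensive.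
Import Order.TTheory GRing.Theory Num.Theory.
Local Open Scope ring_scope.

Lemma asbP (P : Prop) : asb P = true <-> P.
Proof. by rewrite /asb; case: excluded_middle_informative. Qed.

Section Lin.
Variable K : fieldType.
Variable T : finType.
Local Notation n := #|T|.
Definition phi (v : {ffun T -> K^o}) : 'rV[K]_n := \row_j v (enum_val j).
Definition psi (r : 'rV[K]_n) : {ffun T -> K^o} := [ffun t => r 0 (enum_rank t)].
Lemma phiK : cancel phi psi.
Proof. by move=> v; apply/ffunP => t; rewrite ffunE mxE enum_rankK. Qed.
Lemma psiK : cancel psi phi.
Proof. by move=> r; apply/rowP => j; rewrite mxE ffunE enum_valK. Qed.
Lemma phi_sum m (c : 'I_m -> K) (v : 'I_m -> {ffun T -> K^o}) :
  phi (\sum_(l < m) c l *: v l) = \sum_(l < m) c l *: phi (v l).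
Proof.
apply/rowP => j; rewrite mxE summxE sum_ffunE; apply: eq_bigr => l _.
by rewrite !mxE ffunE.
Qed.
Lemma phi0 : phi 0 = 0.
Proof. by apply/rowP => j; rewrite !mxE ffunE. Qed.

Lemma sdim_rank (S : {ffun T -> K^o} -> Prop) p (U : 'M[K]_(p, n))
  (HS : forall v, S v <-> (phi v <= U)%MS) : sdim S = \rank U.
Proof.
apply/eqP; rewrite eqn_leq; apply/andP; split.
  apply/bigmax_leqP => m /asbP [v [Sv iv]].
  pose V := \matrix_(l < m) phi (v l).
  have fV : row_free V.
    apply: inj_row_free => w /rowP wV0; apply/rowP => l.
    rewrite mxE; apply: (iv (fun l => w 0 l)); apply: (can_inj phiK).
    rewrite phi_sum phi0.
    have -> : \sum_(l < m) w 0 l *: phi (v l) = w *m V.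
      by rewrite mulmx_sum_row; apply: eq_bigr => i _; rewrite rowK.
    by apply/rowP => j; rewrite (wV0 j) !mxE.
  rewrite -(eqP fV); apply: mxrankS; apply/row_subP => i.
  by rewrite rowK; apply/HS.
have hr : (\rank U < n.+1)%N by rewrite ltnS rank_leq_col.
apply: (@leq_bigmax_cond _ _ _ (Ordinal hr)) => /=.
apply/asbP.
pose B := row_base U.
exists (fun l => psi (row l B)); split.
  move=> l; apply/HS; rewrite psiK.
  by apply: submx_trans (row_sub _ _) _; rewrite (eq_row_base U).
move=> c hc.
have : (\row_l c l) *m B = 0.
  rewrite mulmx_sum_row; transitivity (phi (\sum_(l < \rank U) c l *: psi (row l B))); last by rewrite hc phi0.
  rewrite phi_sum; apply: eq_bigr => i _.
  by rewrite psiK mxE.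
move=> /eqP; rewrite mulmx_free_eq0 ?row_base_free //.
by move=> /eqP /rowP h l; move: (h l); rewrite !mxE.
Qed.
End Lin.

Section Norm.
Variable K : fieldType.
Implicit Types (u v : K * K).

Definition nrm u : K * K := if u.1 == 0 then (0, 1) else (1, u.2 / u.1).

Lemma nrm_nz u : nz (nrm u).
Proof. by rewrite /nrm /nz; case: ifP => _ /=; rewrite oner_eq0 ?orbT. Qed.

Lemma nrm_id u : nrm (nrm u) = nrm u.
Proof.
rewrite /nrm; have [h|h] := eqVneq u.1 0 => /=; first by rewrite eqxx.
by rewrite oner_eq0 divr1.
Qed.

Lemma proj_eq_nrm u v : nz u -> nz v -> proj_eq u v = (nrm u == nrm v).
Proof.
rewrite /nz /proj_eq /nrm.
have [hu|hu] := eqVneq u.1 0; have [hv|hv] := eqVneq v.1 0 => /= Hu Hv.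
- by rewrite hu hv mul0r mulr0 !eqxx.
  rewrite hu mul0r xpair_eqE eq_sym mulf_eq0 (negbTE Hu) (negbTE hv).
  by rewrite [0 == 1]eq_sym oner_eq0.
- rewrite hv mulr0 xpair_eqE mulf_eq0 (negbTE Hv) (negbTE hu).
  by rewrite oner_eq0.
- rewrite xpair_eqE eqxx /=.
  apply/eqP/eqP => h.
    apply: (@mulIf _ (u.1 * v.1)); first by rewrite mulf_neq0.
    by rewrite !mulrA divfK // mulrAC divfK // -h; ring.
  have := congr1 (fun z => z * (u.1 * v.1)) h => /=.
  rewrite !mulrA divfK // mulrAC divfK // => ->; ring.
Qed.

Lemma nrm_scale u : nz u -> exists2 mu : K, mu != 0 & u = (mu * (nrm u).1, mu * (nrm u).2).
Proof.
rewrite /nz /nrm; have [h|h] := eqVneq u.1 0 => /= hu.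
  exists u.2 => //.
  by rewrite mulr0 mulr1 -h; case: u {h hu}.
exists u.1 => //.
by rewrite mulr1 mulrC divfK //; case: u {h hu}.
Qed.

Lemma ncls_undup (s : seq (K * K)) : all (@nz K) s ->
  ncls s = size (undup (map nrm s)).
Proof.
elim: s => [//|u s IH] /= /andP [hu hs].
have -> : has (proj_eq u) s = (nrm u \in map nrm s).
  apply/hasP/mapP => [[v vs]|[v vs]].
    rewrite proj_eq_nrm //; last by move/allP: hs; apply.
    by move/eqP => e; exists v.
  move=> e; exists v => //; rewrite proj_eq_nrm ?e //.
  by move/allP: hs; apply.
by case: (nrm u \in map nrm s) => /=; rewrite IH.
Qed.

Definition hv (d : nat) (a : K * K) (p : nat) : K := a.1 ^+ p * a.2 ^+ (d - p).

Lemma hv_scale d (mu : K) a p : (p <= d)%N ->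
  hv d (mu * a.1, mu * a.2) p = mu ^+ d * hv d a p.
Proof.
move=> hp; rewrite /hv /= !exprMn.
rewrite -{3}(subnKC hp) exprD; ring.
Qed.

End Norm.

Section Forms.
Variable K : fieldType.
Definition hev d (f : nat -> K) (a : K * K) := \sum_(p < d.+1) f p * hv d a p.
Definition lval (l a : K * K) := l.1 * a.1 + l.2 * a.2.

Lemma forms_exist (ls : seq (K * K)) :
  exists f : nat -> K, forall a, hev (size ls) f a = \prod_(l <- ls) lval l a.
Proof.
elim: ls => [|l ls [f hf]].
  by exists (fun _ => 1) => a; rewrite /hev big_ord1 big_nil /hv !expr0 !mulr1.
set d := size ls.
exists (fun p => l.1 * (if p is p'.+1 then f p' else 0) +
                 l.2 * (if (p <= d)%N then f p else 0)) => a.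
rewrite big_cons -hf /hev /= -/d.
rewrite (eq_bigr (fun p : 'I_d.+2 =>
   l.1 * (if (p : nat) is p'.+1 then f p' else 0) * hv d.+1 a p +
   l.2 * (if (p <= d)%N then f p else 0) * hv d.+1 a p)); last first.
  by move=> p _; rewrite mulrDl.
rewrite big_split /=.
rewrite [X in _ + X]big_ord_recr /= ltnn mulr0 mul0r addr0.
rewrite big_ord_recl /= mulr0 mul0r add0r.
rewrite /lval mulrDl !mulr_sumr; congr (_ + _); apply: eq_bigr => i _.
  by rewrite /hv /bump /= add1n subSS exprS; ring.
rewrite leq_ord /hv subSn ?leq_ord // exprS; ring.
Qed.

End Forms.

Section Ideal.
Variable K : fieldType.
Implicit Types (P : pt K) (f g : Rpoly K).

Definition moneval i j k (t : mon_idx i j k) P : K :=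
  hv i P.1.1 t.1.1 * hv j P.1.2 t.1.2 * hv k P.2 t.2.
Definition ev i j k P (v : {ffun mon_idx i j k -> K}) : K :=
  \sum_t v t * moneval t P.

Definition pv P (j : 'I_6) : K :=
  nth 0 [:: P.1.1.1; P.1.1.2; P.1.2.1; P.1.2.2; P.2.1; P.2.2] j.

Lemma meval_var P i : (i < 6)%N -> meval (pv P) (var K i) =
  nth 0 [:: P.1.1.1; P.1.1.2; P.1.2.1; P.1.2.2; P.2.1; P.2.2] i.
Proof. by move=> hi; rewrite /var mevalXU /pv inordK. Qed.

Lemma mevalXn (v : 'I_6 -> K) (p : Rpoly K) n : meval v (p ^+ n) = meval v p ^+ n.
Proof. exact: rmorphXn. Qed.

Lemma meval_mono P i j k (t : mon_idx i j k) :
  meval (pv P) (mono K t) = moneval t P.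
Proof.
rewrite /mono !mevalM !mevalXn !meval_var //= /moneval /hv.
by rewrite !mulrA.
Qed.

Lemma meval_poly P i j k (v : {ffun mon_idx i j k -> K}) :
  meval (pv P) (poly_of v) = ev P v.
Proof.
rewrite /poly_of raddf_sum; apply: eq_bigr => t _.
by rewrite -meval_mono; exact: mevalZ.
Qed.

Lemma in_IP_meval P f : in_IP P f -> meval (pv P) f = 0.
Proof.
move=> [g1 [g2 [g3 ->]]].
rewrite !mevalD !mevalM /LP1 /LP2 /LP3 !mevalB !mevalZ !meval_var //=.
by rewrite ![_.2 * _.1]mulrC !subrr !mulr0 !addr0.
Qed.

Section Cong.
Variable P : pt K.
Local Notation I := (in_IP P).

Lemma I0 : I 0.
Proof. by exists 0, 0, 0; rewrite !mul0r !addr0. Qed.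
Lemma ID f g : I f -> I g -> I (f + g).
Proof.
move=> [a1 [a2 [a3 ->]]] [b1 [b2 [b3 ->]]].
exists (a1 + b1), (a2 + b2), (a3 + b3); ring.
Qed.
Lemma IM h f : I f -> I (h * f).
Proof.
move=> [a1 [a2 [a3 ->]]]; exists (h * a1), (h * a2), (h * a3); ring.
Qed.
Lemma IZ c f : I f -> I (c *: f).
Proof. by move=> If; rewrite -mul_mpolyC; apply: IM. Qed.
Lemma Isum (J : finType) (F : J -> Rpoly K) : (forall x, I (F x)) -> I (\sum_x F x).
Proof. by move=> h; apply: (big_ind I) => //; [apply: I0 | apply: ID]. Qed.

Definition cg f g := I (f - g).
Lemma cgM f1 g1 f2 g2 : cg f1 g1 -> cg f2 g2 -> cg (f1 * f2) (g1 * g2).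
Proof.
rewrite /cg => h1 h2.
have -> : f1 * f2 - g1 * g2 = f2 * (f1 - g1) + g1 * (f2 - g2) by ring.
by apply: ID; apply: IM.
Qed.
Lemma cgX f g n : cg f g -> cg (f ^+ n) (g ^+ n).
Proof.
move=> h; elim: n => [|n IH]; first by rewrite !expr0 /cg subrr; apply: I0.
by rewrite !exprS; apply: cgM.
Qed.

Definition wv (a : K * K) : K * K :=
  if a.1 != 0 then (a.1^-1, 0) else (0, a.2^-1).
Lemma wvP a : nz a -> a.1 * (wv a).1 + a.2 * (wv a).2 = 1.
Proof.
rewrite /nz /wv; case: (a.1 =P 0) => [->|h] /= h2.
  by rewrite mul0r add0r mulfV.
by rewrite mulfV ?mulr0 ?addr0 //; apply/eqP.
Qed.

Definition Mf (a : K * K) (i0 i1 : nat) : Rpoly K :=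
  (wv a).1%:MP * var K i0 + (wv a).2%:MP * var K i1.

Lemma cg_lin (a : K * K) i0 i1 : nz a ->
  I (a.2 *: var K i0 - a.1 *: var K i1) ->
  cg (var K i0) (a.1%:MP * Mf a i0 i1) /\ cg (var K i1) (a.2%:MP * Mf a i0 i1).
Proof.
move=> /wvP hw IL; rewrite -!mul_mpolyC in IL.
have h1 : (a.1 * (wv a).1 + a.2 * (wv a).2)%:MP = 1 :> Rpoly K by rewrite hw.
rewrite mpolyCD !mpolyCM in h1.
split; rewrite /cg /Mf.
  have -> : var K i0 - a.1%:MP * ((wv a).1%:MP * var K i0 + (wv a).2%:MP * var K i1)
     = (wv a).2%:MP * (a.2%:MP * var K i0 - a.1%:MP * var K i1)
     + (1 - (a.1%:MP * (wv a).1%:MP + a.2%:MP * (wv a).2%:MP)) * var K i0 by ring.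
  by rewrite h1 subrr mul0r addr0; apply: IM.
have -> : var K i1 - a.2%:MP * ((wv a).1%:MP * var K i0 + (wv a).2%:MP * var K i1)
   = - (wv a).1%:MP * (a.2%:MP * var K i0 - a.1%:MP * var K i1)
   + (1 - (a.1%:MP * (wv a).1%:MP + a.2%:MP * (wv a).2%:MP)) * var K i1 by ring.
by rewrite h1 subrr mul0r addr0; apply: IM.
Qed.

Definition MM i j k : Rpoly K :=
  Mf P.1.1 0 1 ^+ i * Mf P.1.2 2 3 ^+ j * Mf P.2 4 5 ^+ k.

Lemma mpolyCX (c : K) n : (c ^+ n)%:MP = c%:MP ^+ n :> Rpoly K.
Proof. exact: rmorphXn. Qed.

Lemma cg_mono (hP : valid_pt P) i j k (t : mon_idx i j k) :
  cg (mono K t) ((moneval t P)%:MP * MM i j k).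
Proof.
move: hP => /and3P [ha hb hc].
have IL1 : I (LP1 P) by exists 1, 0, 0; ring.
have IL2 : I (LP2 P) by exists 0, 1, 0; ring.
have IL3 : I (LP3 P) by exists 0, 0, 1; ring.
have [h0 h1] := cg_lin ha IL1.
have [h2 h3] := cg_lin hb IL2.
have [h4 h5] := cg_lin hc IL3.
set M1 := Mf P.1.1 0 1 in h0 h1 *; set M2 := Mf P.1.2 2 3 in h2 h3 *.
set M3 := Mf P.2 4 5 in h4 h5 *.
have -> : (moneval t P)%:MP * MM i j k =
  (P.1.1.1%:MP * M1) ^+ t.1.1 * (P.1.1.2%:MP * M1) ^+ (i - t.1.1) *
  (P.1.2.1%:MP * M2) ^+ t.1.2 * (P.1.2.2%:MP * M2) ^+ (j - t.1.2) *
  (P.2.1%:MP * M3) ^+ t.2 * (P.2.2%:MP * M3) ^+ (k - t.2).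
  rewrite /moneval /hv /MM !mpolyCM !mpolyCX !exprMn -/M1 -/M2 -/M3.
  have e1 : M1 ^+ i = M1 ^+ t.1.1 * M1 ^+ (i - t.1.1).
    by rewrite -exprD subnKC // -ltnS.
  have e2 : M2 ^+ j = M2 ^+ t.1.2 * M2 ^+ (j - t.1.2).
    by rewrite -exprD subnKC // -ltnS.
  have e3 : M3 ^+ k = M3 ^+ t.2 * M3 ^+ (k - t.2).
    by rewrite -exprD subnKC // -ltnS.
  rewrite e1 e2 e3.
  ring.
rewrite /mono.
repeat apply: cgM; by apply: cgX.
Qed.

Lemma I_poly (hP : valid_pt P) i j k (v : {ffun mon_idx i j k -> K}) :
  I (poly_of v) <-> ev P v = 0.
Proof.
split; first by move=> /in_IP_meval; rewrite meval_poly.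
move=> hev.
have : cg (poly_of v) ((ev P v)%:MP * MM i j k).
  rewrite /cg.
  have -> : poly_of v - (ev P v)%:MP * MM i j k =
     \sum_t v t *: (mono K t - (moneval t P)%:MP * MM i j k).
    rewrite /ev raddf_sum mulr_suml /poly_of -sumrB; apply: eq_bigr => t _.
    rewrite scalerBr; congr (_ - _); rewrite -[v t *: _]mul_mpolyC mulrA; congr (_ * _); exact: mpolyCM.
  by apply: (@Isum (mon_idx i j k)) => t; apply: IZ; apply: cg_mono.
by rewrite /cg hev mpolyC0 mul0r subr0.
Qed.

End Cong.
End Ideal.

Lemma row_free_dual (K : fieldType) m n (A : 'M[K]_(m, n)) :
  (forall r, exists e : 'cV_n, forall r', ((row r' A *m e) 0 0 == 0) = (r' != r)) ->
  row_free A.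
Proof.
move=> he; apply: inj_row_free => w hw; apply/rowP => r; rewrite mxE.
have [e He] := he r.
have : (w *m A *m e) 0 0 = \sum_r' w 0 r' * (row r' A *m e) 0 0.
  rewrite [w *m A]mulmx_sum_row mulmx_suml summxE; apply: eq_bigr => r0 _.
  by rewrite -scalemxAl mxE.
rewrite hw mul0mx mxE (bigD1 r) //= big1 ?addr0; last first.
  by move=> r' hr; move: (He r'); rewrite hr => /eqP ->; rewrite mulr0.
move/esym/eqP; rewrite mulf_eq0; case/orP=> [/eqP //|].
by rewrite He eqxx.
Qed.

Lemma count_index (T0 : eqType) (s : seq T0) m : uniq s ->
  count (fun x => (index x s < m)%N) s = minn m (size s).
Proof.
elim: s m => [|y s IH] m /=; first by rewrite minn0.
case/andP=> ys us; rewrite eqxx.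
rewrite (eq_in_count (a2 := fun x => (index x s < m.-1)%N && (0 < m)%N)); last first.
  move=> x xs; have -> : (y == x) = false by apply: contraNF ys => /eqP ->.
  by case: m => [|m] //=; rewrite andbT.
case: m => [|m] /=.
  by rewrite (eq_count (a2 := pred0)) ?count_pred0 // => x; rewrite andbF.
rewrite (eq_count (a2 := fun x => (index x s < m)%N)); last by move=> x; rewrite andbT.
by rewrite IH // minnSS add1n.
Qed.

Lemma size_sum_count (A B : eqType) (f : A -> B) (L : seq B) (s : seq A) :
  uniq L -> {subset map f s <= L} ->
  size s = \sum_(l <- L) count (fun x => f x == l) s.
Proof.
move=> uL; elim: s => [|x s IH] hs /=.
  by rewrite big1_seq.
rewrite big_split /= -IH; last by move=> y ys; apply: hs; rewrite inE ys orbT.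
have -> : \sum_(l <- L) (f x == l : nat) = count (fun l => f x == l) L.
  by rewrite -sumn_count sumnE big_map.
rewrite (eq_count (a2 := pred1 (f x))); last by move=> l; rewrite /= eq_sym.
by rewrite count_uniq_mem // hs ?inE ?eqxx // add1n.
Qed.

Section Rank.
Variable K : fieldType.
Variables i j k : nat.
Local Notation T := (mon_idx i j k).
Local Notation n := #|T|.
Implicit Types (P : pt K) (S : seq (pt K)).

Definition colv P : 'rV[K]_n := \row_jj moneval (enum_val jj) P.
Definition P00 : pt K := ((0, 0), (0, 0), (0, 0)).
Definition CS S : 'M[K]_(size S, n) := \matrix_(r < size S) colv (nth P00 S r).

Lemma colv_sub S P : P \in S -> (colv P <= CS S)%MS.
Proof.
move=> PS; have hi : (index P S < size S)%N by rewrite index_mem.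
have -> : colv P = row (Ordinal hi) (CS S) by rewrite rowK /= nth_index.
exact: row_sub.
Qed.

Lemma CS_sub S S' : {subset S <= S'} -> (CS S <= CS S')%MS.
Proof.
move=> hS; apply/row_subP => r; rewrite rowK; apply: colv_sub; apply: hS.
exact: mem_nth.
Qed.

Lemma colv_dot P (f : T -> K) :
  (colv P *m \col_jj f (enum_val jj)) 0 0 = \sum_t moneval t P * f t.
Proof.
rewrite mxE [RHS](reindex (fun jj : 'I_n => enum_val jj)) /=; last first.
  by exists (fun t => enum_rank t) => x _; rewrite ?enum_rankK ?enum_valK.
by apply: eq_bigr => t _; rewrite !mxE.
Qed.

Lemma tensor_dot P (f1 f2 f3 : nat -> K) :
  \sum_(t : T) moneval t P * (f1 t.1.1 * f2 t.1.2 * f3 t.2) =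
  hev i f1 P.1.1 * hev j f2 P.1.2 * hev k f3 P.2.
Proof.
transitivity (\sum_(ab : 'I_i.+1 * 'I_j.+1) \sum_(c : 'I_k.+1)
   moneval ((ab, c) : T) P * (f1 ab.1 * f2 ab.2 * f3 c)).
  by rewrite pair_bigA.
transitivity (\sum_(a : 'I_i.+1) \sum_(b : 'I_j.+1) \sum_(c : 'I_k.+1)
   moneval (((a, b), c) : T) P * (f1 a * f2 b * f3 c)).
  by rewrite [RHS]pair_bigA.
rewrite /hev !mulr_suml; apply: eq_bigr => a _.
rewrite -mulrA mulr_suml mulr_sumr; apply: eq_bigr => b _.
rewrite !mulr_sumr; apply: eq_bigr => c _.
rewrite /moneval /=; ring.
Qed.

Definition lf (u : K * K) : K * K := (u.2, - u.1).
Definition pad (u : K * K) : K * K := (u.1, 1 - u.1).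
Definition isn (u : K * K) := nrm u == u.
Definition isnP P := [&& isn P.1.1, isn P.1.2 & isn P.2].

Lemma lval_lf_eq0 u a : isn u -> isn a -> (lval (lf u) a == 0) = (u == a).
Proof.
rewrite /isn => /eqP hu /eqP ha.
have -> : (lval (lf u) a == 0) = proj_eq a u.
  have -> : lval (lf u) a = a.1 * u.2 - a.2 * u.1 by rewrite /lval /lf /=; ring.
  by rewrite subr_eq0.
rewrite proj_eq_nrm; last by rewrite -hu nrm_nz.
  by rewrite hu ha eq_sym.
by rewrite -ha nrm_nz.
Qed.

Lemma pad_val u : isn u -> lval (pad u) u = 1.
Proof.
rewrite /isn => /eqP <-; rewrite /lval /pad /nrm.
by case: ifP => _ /=; ring.
Qed.

Variables (U1 U2 : seq (K * K)).
Hypotheses (hU1 : uniq U1) (hU2 : uniq U2) (sU1 : size U1 = i.+1) (sU2 : size U2 = j.+1).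
Hypotheses (nU1 : {in U1, forall u, isn u}) (nU2 : {in U2, forall u, isn u}).

Definition sameL P0 P := P.1 == P0.1.

Lemma interp (Q : seq (pt K)) (P0 : pt K) : uniq Q -> P0 \in Q ->
  (forall P, P \in Q -> [/\ isnP P, P.1.1 \in U1 & P.1.2 \in U2]) ->
  (count (sameL P0) Q <= k.+1)%N ->
  exists e : 'cV_n, forall P, P \in Q -> ((colv P *m e) 0 0 == 0) = (P != P0).
Proof.
move=> uQ P0Q hQ cQ.
have [/and3P [n01 n02 n03] a0U b0U] := hQ P0 P0Q.
have [f1 hf1] := forms_exist (map lf (rem P0.1.1 U1)).
rewrite size_map size_rem // sU1 /= in hf1.
have [f2 hf2] := forms_exist (map lf (rem P0.1.2 U2)).
rewrite size_map size_rem // sU2 /= in hf2.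
set zs := rem P0 (filter (sameL P0) Q).
have szs : (size zs <= k)%N.
  rewrite size_rem ?mem_filter ?P0Q /sameL ?eqxx // size_filter.
  by case: (count (sameL P0) Q) cQ.
have [f3 hf3] := forms_exist (map (fun P => lf P.2) zs ++ nseq (k - size zs) (pad P0.2)).
rewrite size_cat size_map size_nseq subnKC // in hf3.
exists (\col_(jj < n) (fun t : T => f1 t.1.1 * f2 t.1.2 * f3 t.2) (enum_val jj)).
move=> P PQ.
have [/and3P [n1 n2 n3] aU bU] := hQ P PQ.
rewrite (colv_dot P (fun t : T => f1 t.1.1 * f2 t.1.2 * f3 t.2)) tensor_dot hf1 hf2 hf3.
rewrite !big_map !mulf_eq0 !prodf_seq_eq0.
have E1 : has (fun u => lval (lf u) P.1.1 == 0) (rem P0.1.1 U1) = (P.1.1 != P0.1.1).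
  apply/hasP/idP => [[u]|h].
    rewrite mem_rem_uniq // inE => /andP [hu uU].
    by rewrite lval_lf_eq0 ?nU1 // => /eqP <-.
  by exists P.1.1; rewrite ?mem_rem_uniq ?inE ?h ?aU // lval_lf_eq0 ?eqxx.
have E2 : has (fun u => lval (lf u) P.1.2 == 0) (rem P0.1.2 U2) = (P.1.2 != P0.1.2).
  apply/hasP/idP => [[u]|h].
    rewrite mem_rem_uniq // inE => /andP [hu uU].
    by rewrite lval_lf_eq0 ?nU2 // => /eqP <-.
  by exists P.1.2; rewrite ?mem_rem_uniq ?inE ?h ?bU // lval_lf_eq0 ?eqxx.
rewrite E1 E2.
have [e1|e1] := eqVneq P.1.1 P0.1.1; last first.
  by rewrite /=; apply/esym; apply: contraNneq e1 => ->.
have [e2|e2] := eqVneq P.1.2 P0.1.2; last first.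
  by rewrite /=; apply/esym; apply: contraNneq e2 => ->.
rewrite /=.
have zsP : forall P', P' \in zs -> [/\ P' != P0, P'.1 = P0.1 & P' \in Q].
  move=> P'; rewrite mem_rem_uniq ?filter_uniq // inE mem_filter /sameL.
  by case/andP=> -> /andP [/eqP -> ->].
have [->|ne] := eqVneq P P0.
  apply/negbTE; rewrite has_cat negb_or has_map has_nseq; apply/andP; split.
    apply/hasPn => P' P'zs /=.
    have [ne' e' P'Q] := zsP P' P'zs.
    have [/and3P [_ _ n3'] _ _] := hQ P' P'Q.
    rewrite lval_lf_eq0 //; apply: contra ne' => /eqP e2'.
    by apply/eqP; move: e' e2'; case: P' {P'zs P'Q n3'} => ? ? /= -> ->; case: P0 {zsP hf3 zs szs P0Q cQ hQ n01 n02 n03 a0U b0U hf1 hf2 n1 n2 n3 E1 E2 aU bU PQ e1 e2}.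
  by rewrite /= pad_val // oner_eq0 andbF.
apply/hasP; exists (lf P.2); last by rewrite /= lval_lf_eq0 ?eqxx.
rewrite mem_cat; apply/orP; left; apply: map_f.
rewrite mem_rem_uniq ?filter_uniq // inE ne mem_filter PQ /sameL andbT /=.
by move: e1 e2; case: (P) => [[? ?] ?]; case: (P0) => [[? ?] ?] /= -> ->.
Qed.


Lemma Gfree (zs : seq (K * K)) : size zs = k.+1 -> uniq zs -> {in zs, forall u, isn u} ->
  row_free (\matrix_(r < k.+1, s < k.+1) hv k (nth 0 zs r) s).
Proof.
move=> sz uz nz_.
apply: row_free_dual => r.
have [f hf] := forms_exist (map lf (rem (nth 0 zs r) zs)).
rewrite size_map size_rem ?mem_nth ?sz // /= in hf.
exists (\col_(s < k.+1) f s) => r'.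
rewrite mxE (eq_bigr (fun s : 'I_k.+1 => f s * hv k (nth 0 zs r') s)); last first.
  by move=> s _; rewrite !mxE mulrC.
rewrite -/(hev k f _) hf big_map prodf_seq_eq0.
have hr : (r < size zs)%N by rewrite sz.
have hr' : (r' < size zs)%N by rewrite sz.
apply/hasP/idP => [[u]|h].
  rewrite mem_rem_uniq // inE => /andP [hu uU] /=.
  rewrite lval_lf_eq0 ?nz_ ?mem_nth // => /eqP e.
  by move: hu; apply: contra => /eqP er; rewrite e er.
exists (nth 0 zs r').
  rewrite mem_rem_uniq // inE mem_nth // andbT.
  by rewrite nth_uniq //.
by rewrite /= lval_lf_eq0 ?eqxx // nz_ // mem_nth.
Qed.

Lemma span_line (Q F : seq (pt K)) P : size F = k.+1 -> uniq (map snd F) ->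
  {in F, forall P', isn P'.2 /\ P'.1 = P.1} -> {subset F <= Q} ->
  (colv P <= CS Q)%MS.
Proof.
move=> sF uF hF FQ.
set zs := map snd F.
have szs : size zs = k.+1 by rewrite size_map.
set G := \matrix_(r < k.+1, s < k.+1) hv k (nth 0 zs r) s.
have GU : G \in unitmx.
  rewrite -row_free_unit; apply: Gfree => // u /mapP [P' P'F ->].
  by case: (hF P' P'F).
set g := \row_(s < k.+1) hv k P.2 s.
set lam := g *m invmx G.
have lamG : lam *m G = g by rewrite /lam mulmxKV.
have -> : colv P = \sum_(r < k.+1) lam 0 r *: colv (nth P00 F r).
  apply/rowP => jj; rewrite summxE !mxE.
  set t := enum_val jj.
  rewrite /moneval.
  have -> : hv k P.2 t.2 = (lam *m G) 0 t.2 by rewrite lamG mxE.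
  rewrite mxE mulr_sumr; apply: eq_bigr => r _.
  have rF : nth P00 F r \in F by rewrite mem_nth ?sF.
  have [_ e] := hF _ rF.
  rewrite !mxE /moneval e (nth_map P00) ?sF //; ring.
apply: summx_sub => r _; apply: scalemx_sub; apply: colv_sub; apply: FQ.
by rewrite mem_nth ?sF.
Qed.



Variable Y : seq (pt K).
Hypotheses (uY : uniq Y)
  (hY : forall P, P \in Y -> [/\ isnP P, P.1.1 \in U1 & P.1.2 \in U2]).

Definition inQ P := (index P (filter (sameL P) Y) < k.+1)%N.
Definition Q := filter inQ Y.

Lemma sameL_filter P P' : P'.1 = P.1 -> filter (sameL P') Y = filter (sameL P) Y.
Proof. by move=> e; apply: eq_filter => x; rewrite /sameL e. Qed.

Lemma Q_count P0 : count (sameL P0) Q = minn k.+1 (count (sameL P0) Y).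
Proof.
rewrite -[in RHS]size_filter -(count_index _ (filter_uniq _ uY)) count_filter /Q count_filter.
apply: eq_count => x /=; rewrite /inQ.
case: (boolP (sameL P0 x)) => h; rewrite ?andbT ?andbF //.
by rewrite (@sameL_filter P0 x) //; apply/eqP.
Qed.

Lemma QY : {subset Q <= Y}.
Proof. by move=> x; rewrite mem_filter => /andP []. Qed.

Lemma rank_Q : \rank (CS Q) = size Q.
Proof.
apply/eqP; apply: row_free_dual => r.
have uQ : uniq Q by apply: filter_uniq.
have rQ : nth P00 Q r \in Q by apply: mem_nth.
have [||e He] := @interp Q (nth P00 Q r) uQ rQ.
- by move=> P /QY /hY.
- by rewrite Q_count geq_minl.
exists e => r'; rewrite rowK He ?mem_nth //.
by rewrite nth_uniq.
Qed.

Lemma Y_sub_Q : (CS Y <= CS Q)%MS.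
Proof.
apply/row_subP => r; rewrite rowK.
set P := nth P00 Y r.
have PY : P \in Y by apply: mem_nth.
case: (boolP (P \in Q)) => PQ; first exact: colv_sub.
set L := filter (sameL P) Y.
have uL : uniq L by apply: filter_uniq.
have PL : P \in L by rewrite mem_filter /sameL eqxx.
have iL : (k.+1 <= index P L)%N.
  by move: PQ; rewrite mem_filter PY andbT /inQ -leqNgt.
have sL : (k.+1 < size L)%N by apply: leq_ltn_trans iL _; rewrite index_mem.
set F := take k.+1 L.
have sF : size F = k.+1 by rewrite size_take sL.
have FL : {subset F <= L} by move=> x /mem_take.
have F1 : {in F, forall P', P'.1 = P.1}.
  by move=> x /FL; rewrite mem_filter /sameL => /andP [/eqP].
apply: (@span_line Q F P sF).
- rewrite map_inj_in_uniq ?take_uniq //.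
  move=> x y xF yF e; move: (F1 x xF) (F1 y yF) e.
  by case: x {xF} => ? ?; case: y {yF} => ? ? /= -> -> ->.
- move=> x xF; split; last exact: F1.
  have xY : x \in Y by move: (FL x xF); rewrite mem_filter => /andP [].
  by have [/and3P [_ _ ->] _ _] := hY xY.
- move=> x xF; have xY : x \in Y by move: (FL x xF); rewrite mem_filter => /andP [].
  rewrite mem_filter xY andbT /inQ (@sameL_filter P x) ?F1 //.
  exact: index_ltn.
Qed.

Lemma rank_Y : \rank (CS Y) =
  \sum_(l <- undup (map fst Y)) minn k.+1 (count (fun P => P.1 == l) Y).
Proof.
have -> : \rank (CS Y) = \rank (CS Q).
  apply/eqP; rewrite eqn_leq; apply/andP; split; apply: mxrankS.
    exact: Y_sub_Q.
  exact: CS_sub QY.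
rewrite rank_Q (@size_sum_count _ _ fst (undup (map fst Y))) ?undup_uniq //; last first.
  move=> l /mapP [x /QY xY ->]; by rewrite mem_undup map_f.
apply: eq_big_seq => l; rewrite mem_undup => /mapP [P0 P0Y ->].
have := Q_count P0; rewrite /sameL.
have E : forall s, count (fun P : pt K => P.1 == P0.1) s = count (fun x => x.1 == P0.1) s by [].
by rewrite E => ->.
Qed.

End Rank.


Definition normP (K : fieldType) (P : pt K) : pt K := ((nrm P.1.1, nrm P.1.2), nrm P.2).

Lemma moneval_norm (K : fieldType) (P : pt K) i j k : valid_pt P ->
  exists2 mu : K, mu != 0 & forall (t : mon_idx i j k),
    moneval t P = mu * moneval t (normP P).
Proof.
case/and3P => ha hb hc.
have [m1 m10 e1] := nrm_scale ha.
have [m2 m20 e2] := nrm_scale hb.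
have [m3 m30 e3] := nrm_scale hc.
exists (m1 ^+ i * m2 ^+ j * m3 ^+ k).
  by rewrite !mulf_neq0 // expf_neq0.
move=> t; rewrite /moneval [in LHS]e1 [in LHS]e2 [in LHS]e3 /=.
rewrite !hv_scale; [ring|by rewrite -ltnS ..].
Qed.

Lemma ev_norm (K : fieldType) (P : pt K) i j k (v : {ffun mon_idx i j k -> K}) :
  valid_pt P -> (ev P v == 0) = (ev (normP P) v == 0).
Proof.
move=> hP; have [mu mu0 hm] := moneval_norm i j k hP.
have -> : ev P v = mu * ev (normP P) v.
  by rewrite /ev mulr_sumr; apply: eq_bigr => t _; rewrite hm; ring.
by rewrite mulf_eq0 (negbTE mu0).
Qed.

Lemma dot_ev (K : fieldType) i j k (Y : seq (pt K)) (v : {ffun mon_idx i j k -> K^o}) r :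
  \sum_j0 phi v 0 j0 * (CS i j k Y)^T j0 r = ev (nth (P00 K) Y r) v.
Proof.
rewrite /ev [RHS](reindex (fun jj : 'I_#|mon_idx i j k| => enum_val jj)) /=; last first.
  by exists (fun t => enum_rank t) => x _; rewrite ?enum_rankK ?enum_valK.
by apply: eq_bigr => t _; rewrite !mxE.
Qed.

Lemma HX_rank (K : fieldType) (X : seq (pt K)) i j k : all (@valid_pt K) X ->
  HX X i j k = \rank (CS i j k (map (@normP K) X)).
Proof.
move=> hX; rewrite /HX.
set Y := map (@normP K) X.
rewrite (@sdim_rank _ _ _ _ (1%:M : 'M_#|mon_idx i j k|)); last by move=> v; rewrite submx1.
rewrite (@sdim_rank _ _ _ _ (kermx (CS i j k Y)^T)); last first.
  move=> v; rewrite sub_kermx; split.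
    move=> hI; apply/eqP/rowP => r; rewrite !mxE dot_ev.
    have hr : (r < size X)%N by apply: (leq_trans (ltn_ord r)); rewrite /Y size_map.
    rewrite (nth_map (P00 K)) //.
    have PX : nth (P00 K) X r \in X by apply: mem_nth.
    have vP : valid_pt (nth (P00 K) X r) by move/allP: hX; apply.
    by apply/eqP; rewrite -ev_norm //; apply/eqP; apply/(I_poly vP); apply: hI.
  move=> /eqP h P PX.
  have vP : valid_pt P by move/allP: hX; apply.
  apply/(I_poly vP); apply/eqP; rewrite ev_norm //.
  have hr : (index P X < size Y)%N by rewrite size_map index_mem.
  move/rowP: h => /(_ (Ordinal hr)); rewrite !mxE dot_ev /=.
  by rewrite (nth_map (P00 K)) ?nth_index ?index_mem // => ->.
rewrite mxrank1 mxrank_ker mxrank_tr subKn //.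
exact: rank_leq_col.
Qed.

Lemma sum_id (B : Type) (L : seq B) (c : B -> nat) k :
  (count (fun l => c l == k.+1) L)%:Z =
  2 * (\sum_(l <- L) minn k.+1 (c l))%:Z - (\sum_(l <- L) minn k (c l))%:Z
  - (\sum_(l <- L) minn k.+2 (c l))%:Z.
Proof.
elim: L => [|x L IH]; first by rewrite !big_nil.
rewrite /= !big_cons !PoszD IH.
case: eqP => [->|h] /=; lia.
Qed.

Section Lines.
Variable K : fieldType.
Implicit Types (u x a : K * K) (P Q : pt K).

Definition lineof (l : (K * K) * (K * K)) : line K := (lf l.1, lf l.2).

Lemma lval_lf_gen u x : nz u -> nz x -> (lval (lf u) x == 0) = (nrm x == nrm u).
Proof.
move=> hu hx.
have -> : lval (lf u) x = x.1 * u.2 - x.2 * u.1 by rewrite /lval /lf /=; ring.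
by rewrite subr_eq0 -/(proj_eq x u) proj_eq_nrm.
Qed.

Lemma isn_nz u : isn u -> nz u.
Proof. by rewrite /isn => /eqP <-; apply: nrm_nz. Qed.

Lemma isn_nrm u : isn (nrm u).
Proof. by rewrite /isn nrm_id. Qed.

Lemma lf_nz u : nz u -> nz (lf u).
Proof. by rewrite /nz /lf /= oppr_eq0 orbC. Qed.

Lemma proj_eq_lf a b : proj_eq (lf a) (lf b) = proj_eq a b.
Proof. by rewrite /proj_eq /lf /= mulrN mulNr eqr_opp eq_sym. Qed.

Lemma on_line_of l P : isn l.1 -> isn l.2 -> valid_pt P ->
  on_line (lineof l) P = ((normP P).1 == l).
Proof.
move=> h1 h2 /and3P [ha hb _].
have -> : on_line (lineof l) P = (lval (lf l.1) P.1.1 == 0) && (lval (lf l.2) P.1.2 == 0) by [].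
have n1 := isn_nz h1; have n2 := isn_nz h2.
rewrite !lval_lf_gen //.
move: h1 h2; rewrite /isn => /eqP -> /eqP ->.
by case: l {n1 n2} => ? ?; rewrite /normP /= xpair_eqE.
Qed.

Lemma line_complete (l : line K) P : valid_line l -> valid_pt P -> on_line l P ->
  (forall Q, valid_pt Q -> on_line l Q = on_line (lineof (normP P).1) Q) /\
  same_line l (lineof (normP P).1).
Proof.
case/andP => hl1 hl2 vP.
set b1 := (- l.1.2, l.1.1); set b2 := (- l.2.2, l.2.1).
have eb1 : l.1 = lf b1 by rewrite /lf /= opprK; case: (l.1).
have eb2 : l.2 = lf b2 by rewrite /lf /= opprK; case: (l.2).
have nb1 : nz b1 by move: hl1; rewrite eb1 /nz /lf /= oppr_eq0 orbC.
have nb2 : nz b2 by move: hl2; rewrite eb2 /nz /lf /= oppr_eq0 orbC.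
have onl : forall Q, valid_pt Q -> on_line l Q = (nrm Q.1.1 == nrm b1) && (nrm Q.1.2 == nrm b2).
  move=> Q /and3P [qa qb _].
  have -> : on_line l Q = (lval l.1 Q.1.1 == 0) && (lval l.2 Q.1.2 == 0) by [].
  by rewrite eb1 eb2 !lval_lf_gen.
move=> hP; move: (hP); rewrite onl // => /andP [/eqP p1 /eqP p2].
split.
  move=> Q vQ; rewrite onl // on_line_of ?isn_nrm //= xpair_eqE p1 p2.
  by [].
rewrite /same_line /lineof /= eb1 eb2 !proj_eq_lf.
by rewrite !proj_eq_nrm ?nrm_nz // !nrm_id p1 p2 !eqxx.
Qed.

End Lines.

Lemma Lns_isn (K : fieldType) (X : seq (pt K)) l :
  l \in undup (map fst (map (@normP K) X)) -> isn l.1 && isn l.2.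
Proof.
rewrite mem_undup => /mapP [P /mapP [P' _ ->] ->].
by rewrite /= !isn_nrm.
Qed.

Lemma npts_lineof (K : fieldType) (X : seq (pt K)) l : all (@valid_pt K) X ->
  isn l.1 -> isn l.2 ->
  npts X (lineof l) = count (fun P => P.1 == l) (map (@normP K) X).
Proof.
move=> hX h1 h2; rewrite /npts count_map; apply: eq_in_count => P PX /=.
by rewrite on_line_of //; move/allP: hX; apply.
Qed.

Lemma r_is_main (K : fieldType) (X : seq (pt K)) (hX : all (@valid_pt K) X) k :
  r_is X k.+1 (count (fun l => count (fun P => P.1 == l) (map (@normP K) X) == k.+1)
                  (undup (map fst (map (@normP K) X)))).
Proof.
set Y := map (@normP K) X.
set Lns := undup (map fst Y).
set cnt := fun l => count (fun P => P.1 == l) Y.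
exists (map (@lineof K) (filter (fun l => cnt l == k.+1) Lns)); split.
- by rewrite size_map size_filter.
- apply/allP => L /mapP [l]; rewrite mem_filter => /andP [/eqP hc lL] ->.
  have /andP [h1 h2] := Lns_isn lL.
  by rewrite /valid_line /= !lf_nz ?isn_nz //= npts_lineof // -/Y -/(cnt l) hc.
- rewrite pairwise_map.
  apply: (@sub_in_pairwise _ [pred l | isn l.1 && isn l.2] [rel x y | x != y]).
  + move=> x y /andP [hx1 hx2] /andP [hy1 hy2] /=; apply: contra.
    rewrite /same_line /lineof /= !proj_eq_lf !proj_eq_nrm ?isn_nz //.
    move: hx1 hx2 hy1 hy2; rewrite /isn => /eqP -> /eqP -> /eqP -> /eqP ->.
    move=> /andP [/eqP e1 /eqP e2]; apply/eqP.
    by rewrite [x]surjective_pairing [y]surjective_pairing e1 e2.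
  + by apply/allP => l; rewrite mem_filter => /andP [_ /Lns_isn].
  + by apply: pairwise_filter; rewrite -uniq_pairwise undup_uniq.
- move=> l vl hn.
  have : has (on_line l) X by rewrite has_count -/(npts X l) hn.
  case/hasP => P PX onP.
  have vP : valid_pt P by move/allP: hX; apply.
  have [eqon sl] := line_complete vl vP onP.
  apply/hasP; exists (lineof (normP P).1) => //.
  apply: map_f; rewrite mem_filter.
  have LL : (normP P).1 \in Lns by rewrite mem_undup; apply: map_f; apply: map_f.
  rewrite LL andbT; have /andP [h1 h2] := Lns_isn LL.
  rewrite /cnt -npts_lineof // -hn /npts; apply/eqP/esym; apply: eq_in_count => Q QX.
  by apply: eqon; move/allP: hX; apply.
Qed.

Lemma undup_map_nil (A B : eqType) (f : A -> B) (s : seq A) :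
  size (undup (map f s)) = 0%N -> s = [::].
Proof.
case: s => // x s /eqP; rewrite size_eq0 => /eqP h.
have : f x \in undup (map f (x :: s)) by rewrite mem_undup map_f ?mem_head.
by rewrite h.
Qed.

Lemma PoszS1 (n : nat) : (n.+1)%:Z - 1 = n%:Z.
Proof. by rewrite -addn1 PoszD addrK. Qed.

Unset Implicit Arguments.
Set Strict Implicit.

Theorem theorem3p1 (K : closedFieldType) (hchar : [pchar K] =i pred0)
  (X : seq (pt K)) (hX : all (@valid_pt K) X)
  (hdist : pairwise (fun P Q => ~~ pt_eq P Q) X) (k : nat) :
  let t1 := card_pi1 X in
  let t2 := card_pi2 X in
  let H := fun c : int => HXz X (t1%:Z - 1) (t2%:Z - 1) c in
  let d := fun c : int => H c - H (c - 1) in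
  exists r : nat, r_is X k.+1 r /\
    r%:Z = d k%:Z - d (k%:Z + 1) /\
    r%:Z = 2 * H k%:Z - H (k%:Z - 1) - H (k%:Z + 1).
Proof.
move=> t1 t2 H d.
set Y := map (@normP K) X.
set Lns := undup (map fst Y).
set cnt := fun l => count (fun P => P.1 == l) Y.
set U1 := undup (map (fun P => P.1.1) Y).
set U2 := undup (map (fun P => P.1.2) Y).
have vX : forall P, P \in X -> valid_pt P by move=> P; move/allP: hX; apply.
have ht1 : t1 = size U1.
  rewrite /t1 /card_pi1 ncls_undup; last first.
    by apply/allP => u /mapP [P PX ->]; case/and3P: (vX P PX).
  by rewrite -map_comp /U1 /Y -map_comp.
have ht2 : t2 = size U2.
  rewrite /t2 /card_pi2 ncls_undup; last first.
    by apply/allP => u /mapP [P PX ->]; case/and3P: (vX P PX).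
  by rewrite -map_comp /U2 /Y -map_comp.
have uY : uniq Y.
  rewrite uniq_pairwise /Y pairwise_map.
  apply: (sub_in_pairwise (P := [pred P | valid_pt P])) hdist => //.
  move=> P Q /and3P [pa pb pc] /and3P [qa qb qc] /=; apply: contra => /eqP e.
  rewrite /pt_eq !proj_eq_nrm //.
  by move: e; rewrite /normP => [[-> -> ->]]; rewrite !eqxx.
have hH : forall c : nat, H c%:Z = (\sum_(l <- Lns) minn c.+1 (cnt l))%:Z.
  move=> c; rewrite /H ht1 ht2.
  case E1: (size U1) => [|i].
    have -> : Lns = [::] by rewrite /Lns (undup_map_nil E1).
    by rewrite big_nil.
  case E2: (size U2) => [|j].
    have -> : Lns = [::] by rewrite /Lns (undup_map_nil E2).
    by rewrite big_nil.
  rewrite !PoszS1 /= HX_rank //.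
  congr Posz.
  apply: (@rank_Y K i j c U1 U2) => //.
  - exact: undup_uniq.
  - exact: undup_uniq.
  - by move=> u; rewrite mem_undup => /mapP [P /mapP [P' _ ->] ->]; apply: isn_nrm.
  - by move=> u; rewrite mem_undup => /mapP [P /mapP [P' _ ->] ->]; apply: isn_nrm.
  - move=> P PY; split.
    + by move: PY => /mapP [P' _ ->]; rewrite /isnP /= !isn_nrm.
    + by rewrite mem_undup; apply: map_f.
    + by rewrite mem_undup; apply: map_f.
have hHm : H (k%:Z - 1) = (\sum_(l <- Lns) minn k (cnt l))%:Z.
  case: k => [|k'].
    rewrite big1 => [|l _]; last by rewrite min0n.
    rewrite /H /HXz; case: (t1%:Z - 1) => a; case: (t2%:Z - 1) => b //.
  by rewrite PoszS1 hH.
have hHp : H (k%:Z + 1) = (\sum_(l <- Lns) minn k.+2 (cnt l))%:Z.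
  by rewrite -[1]/(Posz 1) -PoszD addn1 hH.
exists (count (fun l => cnt l == k.+1) Lns); split; first exact: r_is_main.
have e1 : k%:Z + 1 - 1 = k%:Z by rewrite addrK.
rewrite /d e1 hHm hHp hH sum_id.
split; lia.
Qed.
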